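(* Let $M,N,K\ge 1$ be integers, $\mathcal K=\{1,\dots,K\}$, $\mathbf G\in\mathbb C^{N\times M}$, $\mathbf h_1,\dots,\mathbf h_K\in\mathbb C^{M}$, $P_0>0$, and for each $k\in\mathcal K$ let $\Gamma_k>0$ and $\sigma_k^2>0$. Write $\mathbf H_k=\mathbf h_k\mathbf h_k^H$. For a positive semidefinite $\mathbf R\in\mathbb C^{M\times M}$ let $f(\mathbf R)=\mathrm{tr}\big((\mathbf G\mathbf R\mathbf G^H)^{-1}\big)$ when $\mathbf G\mathbf R\mathbf G^H$ is invertible, and $f(\mathbf R)=+\infty$ otherwise. Consider the problems: (P1.1): minimize $f\big(\sum_{k\in\mathcal K}\mathbf w_k\mathbf w_k^H+\mathbf R_0\big)$ over $\mathbf w_1,\dots,\mathbf w_K\in\mathbb C^M$ and Hermitian $\mathbf R_0\in\mathbb C^{M\times M}$, subject to $\frac{|\mathbf h_k^H\mathbf w_k|^2}{\sum_{i\in\mathcal K,i\ne k}|\mathbf h_k^H\mathbf w_i|^2+\mathbf h_k^H\mathbf R_0\mathbf h_k+\sigma_k^2}\ge\Gamma_k$ for all $k\in\mathcal K$, $\sum_{k\in\mathcal K}\|\mathbf w_k\|^2+\mathrm{tr}(\mathbf R_0)\le P_0$, and $\mathbf R_0\succeq\mathbf 0$; (P1.2): minimize $f\big(\sum_{k\in\mathcal K}\mathbf W_k+\mathbf R_0\big)$ over Hermitian $\mathbf W_1,\dots,\mathbf W_K,\mathbf R_0\in\mathbb C^{M\times M}$, subject to $\frac{1}{\Gamma_k}\mathrm{tr}(\mathbf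 H_k\mathbf W_k)-\sum_{i\in\mathcal K,i\ne k}\mathrm{tr}(\mathbf H_k\mathbf W_i)-\mathrm{tr}(\mathbf H_k\mathbf R_0)\ge\sigma_k^2$ for all $k\in\mathcal K$, $\sum_{k\in\mathcal K}\mathrm{tr}(\mathbf W_k)+\mathrm{tr}(\mathbf R_0)\le P_0$, $\mathbf R_0\succeq\mathbf 0$, $\mathbf W_k\succeq\mathbf 0$ and $\mathrm{rank}(\mathbf W_k)\le 1$ for all $k\in\mathcal K$; (SDR1.2): the same as (P1.2) but without the constraints $\mathrm{rank}(\mathbf W_k)\le1$. Then (P1.1), (P1.2) and (SDR1.2) have the same optimal value. Moreover, if $\{\tilde{\mathbf W}_k\}_{k\in\mathcal K},\tilde{\mathbf R}_0$ is an optimal solution of (SDR1.2), then $\mathbf w_k^\star=(\mathbf h_k^H\tilde{\mathbf W}_k\mathbf h_k)^{-1/2}\tilde{\mathbf W}_k\mathbf h_k$ for $k\in\mathcal K$ and $\mathbf R_0^\star=\tilde{\mathbf R}_0+\sum_{k\in\mathcal K}\tilde{\mathbf W}_k-\sum_{k\in\mathcal K}\mathbf w_k^\star(\mathbf w_k^\star)^H$ form an optimal solution of (P1.1).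
   Context: This is the transmit beamforming subproblem of an IRS-enabled integrated sensing and communication system with a fixed IRS reflection vector: $\mathbf h_k$ is the combined channel from the base station ($M$ antennas) to user $k$, $\mathbf w_k$ the information beamformer for user $k$, $\mathbf R_0$ the covariance matrix of the dedicated sensing signal, $\mathbf G$ the base-station-to-IRS channel, $\Gamma_k$ the SINR threshold, $\sigma_k^2$ the noise variance, and $P_0$ the power budget. The objective is (up to a positive constant) the Cramér-Rao bound for estimating the target response matrix. Here users cannot cancel sensing-signal interference, hence the term $\mathbf h_k^H\mathbf R_0\mathbf h_k$ in the SINR. *)

(* Defs.v *)
From HB Require Import structures.
From mathcomp Require Import all_boot all_order all_algebra.
From mathcomp Require Import all_classical all_reals ereal.
From mathcomp Require Import complex.
Import Order.TTheory GRing.Theory Num.Theory.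
Set Implicit Arguments. Unset Strict Implicit. Unset Printing Implicit Defensive.
Local Open Scope ring_scope.
Local Open Scope complex_scope.

Section Defs.
Variable R : realType.
Local Notation C := R[i].

Definition ctrans (m n : nat) (A : 'M[C]_(m, n)) : 'M[C]_(n, m) :=
  (map_mx Num.conj A)^T.

Definition hermitian (n : nat) (A : 'M[C]_n) : Prop := ctrans A = A.

Definition psd (n : nat) (A : 'M[C]_n) : Prop :=
  hermitian A /\ forall x : 'cV[C]_n, 0 <= (ctrans x *m A *m x) 0 0.

Definition qf (n : nat) (x : 'cV[C]_n) (A : 'M[C]_n) (y : 'cV[C]_n) : C :=
  (ctrans x *m A *m y) 0 0.

Definition ip (n : nat) (x y : 'cV[C]_n) : C := (ctrans x *m y) 0 0.

Definition sqnorm (n : nat) (x : 'cV[C]_n) : C := \sum_i `|x i 0| ^+ 2.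

(* f(R) = tr((G R G^H)^{-1}) if G R G^H invertible, +oo otherwise
   (the trace is real for PSD R; we take its real part) *)
Definition crb (N M : nat) (G : 'M[C]_(N, M)) (Rm : 'M[C]_M) : \bar R :=
  let A := G *m Rm *m ctrans G in
  if A \in unitmx then ((complex.Re (\tr (invmx A)))%:E)%E else (+oo)%E.

Variables (M N K : nat) (G : 'M[C]_(N, M)) (h : 'I_K -> 'cV[C]_M)
  (P0 : R) (Gamma sigma2 : 'I_K -> R).

Definition feasible11 (x : ('I_K -> 'cV[C]_M) * 'M[C]_M) : Prop :=
  let w := x.1 in let R0 := x.2 in
  [/\ forall k : 'I_K,
        `|ip (h k) (w k)| ^+ 2 /
          (\sum_(i < K | i != k) `|ip (h k) (w i)| ^+ 2 + qf (h k) R0 (h k)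
             + (sigma2 k)%:C) >= (Gamma k)%:C,
      \sum_k sqnorm (w k) + \tr R0 <= P0%:C,
      hermitian R0 & psd R0].

Definition obj11 (x : ('I_K -> 'cV[C]_M) * 'M[C]_M) : \bar R :=
  crb G (\sum_k (x.1 k *m ctrans (x.1 k)) + x.2).

Definition Hm (k : 'I_K) : 'M[C]_M := h k *m ctrans (h k).

Definition feasibleSDR (x : ('I_K -> 'M[C]_M) * 'M[C]_M) : Prop :=
  let W := x.1 in let R0 := x.2 in
  [/\ forall k : 'I_K,
        ((Gamma k)^-1)%:C * \tr (Hm k *m W k)
          - \sum_(i < K | i != k) \tr (Hm k *m W i) - \tr (Hm k *m R0)
          >= (sigma2 k)%:C,
      \sum_k \tr (W k) + \tr R0 <= P0%:C,
      hermitian R0 /\ psd R0 &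
      forall k, hermitian (W k) /\ psd (W k)].

Definition feasible12 (x : ('I_K -> 'M[C]_M) * 'M[C]_M) : Prop :=
  feasibleSDR x /\ forall k, (\rank (x.1 k) <= 1)%N.

Definition obj12 (x : ('I_K -> 'M[C]_M) * 'M[C]_M) : \bar R :=
  crb G (\sum_k x.1 k + x.2).

(* optimal values (infimum in the extended reals; +oo if infeasible) *)
Definition val11 : \bar R := ereal_inf [set obj11 x | x in feasible11].
Definition val12 : \bar R := ereal_inf [set obj12 x | x in feasible12].
Definition valSDR : \bar R := ereal_inf [set obj12 x | x in feasibleSDR].

Definition wstar (W : 'I_K -> 'M[C]_M) (k : 'I_K) : 'cV[C]_M :=
  (sqrtC (qf (h k) (W k) (h k)))^-1 *: (W k *m h k).

Definition R0star (W : 'I_K -> 'M[C]_M) (R0 : 'M[C]_M) : 'M[C]_M :=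
  R0 + \sum_k W k - \sum_k (wstar W k *m ctrans (wstar W k)).

End Defs.

(* Main.v *)
From Pilot Require Import Defs.
From HB Require Import structures.
From mathcomp Require Import all_boot all_order all_algebra.
From mathcomp Require Import all_classical all_reals ereal.
From mathcomp Require Import complex.
From mathcomp Require Import ring.
Import Order.TTheory GRing.Theory Num.Theory.
Local Open Scope ring_scope.
Local Open Scope complex_scope.

Section Helpers.
Variable R : realType.
Local Notation C := R[i].

Lemma ctransE m n (A : 'M[C]_(m, n)) i j : ctrans A i j = Num.conj (A j i).
Proof. by rewrite !mxE. Qed.

Lemma ctransM m n p (A : 'M[C]_(m, n)) (B : 'M[C]_(n, p)) :
  ctrans (A *m B) = ctrans B *m ctrans A.
Proof. by rewrite /ctrans map_mxM trmx_mul. Qed.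

Lemma ctransK m n (A : 'M[C]_(m, n)) : ctrans (ctrans A) = A.
Proof. by apply/matrixP => i j; rewrite !ctransE conjCK. Qed.

Lemma ctransD m n (A B : 'M[C]_(m, n)) : ctrans (A + B) = ctrans A + ctrans B.
Proof. by apply/matrixP => i j; rewrite !mxE rmorphD. Qed.

Lemma ctransB m n (A B : 'M[C]_(m, n)) : ctrans (A - B) = ctrans A - ctrans B.
Proof. by apply/matrixP => i j; rewrite !mxE rmorphB. Qed.

Lemma ctransZ m n (c : C) (A : 'M[C]_(m, n)) : ctrans (c *: A) = Num.conj c *: ctrans A.
Proof. by apply/matrixP => i j; rewrite !mxE rmorphM. Qed.

Lemma ctrans_sum m n (I : finType) (F : I -> 'M[C]_(m, n)) :
  ctrans (\sum_i F i) = \sum_i ctrans (F i).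
Proof.
apply/matrixP => i j; rewrite ctransE !summxE rmorph_sum.
by apply: eq_bigr => k _; rewrite ctransE.
Qed.

Lemma mx11E (A : 'M[C]_1) : (ctrans A) 0 0 = Num.conj (A 0 0).
Proof. by rewrite ctransE. Qed.

Lemma mul11 m (A : 'M[C]_(m, 1)) (B : 'M[C]_(1, m)) i j :
  (A *m B) i j = A i 0 * B 0 j.
Proof. by rewrite mxE big_ord1. Qed.

Lemma tr11 (A : 'M[C]_1) : \tr A = A 0 0.
Proof. by rewrite /mxtrace big_ord1. Qed.

Lemma qf_conj n (x y : 'cV[C]_n) A : Num.conj (qf x A y) = qf y (ctrans A) x.
Proof. by rewrite /qf -mx11E !ctransM ctransK mulmxA. Qed.

Lemma ip_conj n (x y : 'cV[C]_n) : Num.conj (ip x y) = ip y x.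
Proof. by rewrite /ip -mx11E !ctransM ctransK. Qed.

Lemma qf_herm n (x y : 'cV[C]_n) A : Pilot.Defs.hermitian A -> Num.conj (qf x A y) = qf y A x.
Proof. by move=> hA; rewrite qf_conj hA. Qed.

Lemma qfD n (x y : 'cV[C]_n) A B : qf x (A + B) y = qf x A y + qf x B y.
Proof. by rewrite /qf mulmxDr mulmxDl mxE. Qed.

Lemma qfB n (x y : 'cV[C]_n) A B : qf x (A - B) y = qf x A y - qf x B y.
Proof. by rewrite /qf mulmxBr mulmxBl !mxE. Qed.

Lemma qf_sum n (x y : 'cV[C]_n) (I : finType) (P : pred I) (F : I -> 'M[C]_n) :
  qf x (\sum_(i | P i) F i) y = \sum_(i | P i) qf x (F i) y.
Proof. by rewrite /qf mulmx_sumr mulmx_suml summxE. Qed.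

Lemma qfBl n (x z y : 'cV[C]_n) A : qf (x - z) A y = qf x A y - qf z A y.
Proof. by rewrite /qf ctransB !mulmxBl !mxE. Qed.

Lemma qfZl n (x y : 'cV[C]_n) c A : qf (c *: x) A y = Num.conj c * qf x A y.
Proof. by rewrite /qf ctransZ -!scalemxAl mxE. Qed.

Lemma qfBr n (x z y : 'cV[C]_n) A : qf x A (y - z) = qf x A y - qf x A z.
Proof. by rewrite /qf !mulmxBr !mxE. Qed.

Lemma qfZr n (x y : 'cV[C]_n) c A : qf x A (c *: y) = c * qf x A y.
Proof. by rewrite /qf -!scalemxAr mxE. Qed.

Lemma abs2_ip n (x y : 'cV[C]_n) : `|ip x y| ^+ 2 = qf x (y *m ctrans y) x.
Proof.
rewrite normCK ip_conj /qf /ip !mulmxA.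
by rewrite -(mulmxA (ctrans x *m y)) [RHS]mxE big_ord1.
Qed.

Lemma ipZr n (x y : 'cV[C]_n) c : ip x (c *: y) = c * ip x y.
Proof. by rewrite /ip -scalemxAr mxE. Qed.

Lemma ip_qf n (x h : 'cV[C]_n) W : ip x (W *m h) = qf x W h.
Proof. by rewrite /ip /qf mulmxA. Qed.

Lemma trH n (h : 'cV[C]_n) A : \tr (h *m ctrans h *m A) = qf h A h.
Proof. by rewrite -mulmxA mxtrace_mulC tr11. Qed.

Lemma tr_sqnorm n (w : 'cV[C]_n) : \tr (w *m ctrans w) = sqnorm w.
Proof.
rewrite mxtrace_mulC tr11 mxE /sqnorm; apply: eq_bigr => j _.
by rewrite ctransE normCKC.
Qed.

Lemma herm_outer n (w : 'cV[C]_n) : Pilot.Defs.hermitian (w *m ctrans w).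
Proof. by rewrite /Pilot.Defs.hermitian ctransM ctransK. Qed.

Lemma psd_outer n (w : 'cV[C]_n) : psd (w *m ctrans w).
Proof.
split; first exact: herm_outer.
by move=> x; rewrite -[X in 0 <= X]/(qf x _ x) -abs2_ip exprn_ge0.
Qed.

Lemma cs n (A : 'M[C]_n) x y : psd A -> 0 < qf y A y ->
  qf x A y * qf y A x / qf y A y <= qf x A x.
Proof.
move=> [hA pA] ay.
set a := qf y A y; set c := qf y A x; set d := qf x A y.
have hv := pA (x - (c / a) *: y).
have E : (ctrans (x - (c / a) *: y) *m A *m (x - (c / a) *: y)) 0 0
   = qf x A x - d * c / a.
  rewrite -[LHS]/(qf _ _ _) qfBl qfZl !qfBr !qfZr.
  have dc : Num.conj c = d by rewrite /c qf_herm.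
  have aa : Num.conj a = a by rewrite geC0_conj // ltW.
  have ct : Num.conj (c / a) = d / a 
    by transitivity (Num.conj c / Num.conj a); [exact: fmorph_div | rewrite dc aa].
  rewrite ct -/a -/c -/d.
  have a0 : a != 0 by rewrite gt_eqF.
  by field.
by rewrite E subr_ge0 in hv.
Qed.


Lemma ltC0 (r : R) : (0 < r%:C :> C) = (0 < r).
Proof. by rewrite ltcE /= eqxx. Qed.

Lemma invC (r : R) : (r^-1)%:C = (r%:C)^-1 :> C.
Proof. exact: fmorphV. Qed.

Lemma sinr_equiv (g s : R) (a I q : C) : 0 < g -> 0 < s -> 0 <= I -> 0 <= q ->
  ((g%:C) <= a / (I + q + s%:C)) = (s%:C <= (g^-1)%:C * a - I - q).
Proof.
move=> g0 s0 I0 q0.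
have gC : 0 < g%:C :> C by rewrite ltC0.
have sC : 0 < s%:C :> C by rewrite ltC0.
have D0 : 0 < I + q + s%:C by rewrite ltr_wpDl // addr_ge0.
rewrite invC -subr_ge0 -[RHS]subr_ge0.
have -> : a / (I + q + s%:C) - g%:C = (g%:C / (I + q + s%:C)) *
   ((g%:C)^-1 * a - I - q - s%:C).
  have h1 : I + q + s%:C != 0 by rewrite gt_eqF.
  have h2 : g%:C != 0 :> C by rewrite gt_eqF.
  move: h1 h2; generalize (g%:C) (s%:C) => gg ss h1 h2.
  have -> : gg^-1 * a - I - q - ss = gg^-1 * a - (I + q + ss) by ring.
  by field; rewrite h1 h2.
by rewrite pmulr_rge0 // divr_gt0.
Qed.

Lemma abs2_ipZ n (x v : 'cV[C]_n) (a : C) : 0 < a ->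
  `|ip x ((sqrtC a)^-1 *: v)| ^+ 2 = `|ip x v| ^+ 2 / a.
Proof.
move=> a0; rewrite ipZr normrM exprMn normfV (@ger0_norm _ (sqrtC a)).
  by rewrite exprVn sqrtCK mulrC.
by rewrite sqrtC_ge0 ltW.
Qed.

Lemma psd_qf n (A : 'M[C]_n) x : psd A -> 0 <= qf x A x.
Proof. by case=> _ /(_ x). Qed.

End Helpers.

Section Main.
Variables (R : realType) (M N K : nat) (G : 'M[R[i]]_(N, M)) (h : 'I_K -> 'cV[R[i]]_M)
  (P0 : R) (Gamma sigma2 : 'I_K -> R).
Hypotheses (Gam0 : forall k, 0 < Gamma k) (sig0 : forall k, 0 < sigma2 k).

Definition mapA (x : ('I_K -> 'cV[R[i]]_M) * 'M[R[i]]_M) :=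
  (fun k => x.1 k *m ctrans (x.1 k), x.2).

Lemma featA x : feasible11 h P0 Gamma sigma2 x -> feasible12 h P0 Gamma sigma2 (mapA x).
Proof.
case: x => w R0 [sinr pow hR pR] /=; split; last first.
  by move=> k /=; apply: mulmx_max_rank.
split => //=.
- move=> k; rewrite /Hm trH; under eq_bigr => i _ do rewrite trH -abs2_ip.
  rewrite trH -abs2_ip -sinr_equiv //.
  + by apply: sumr_ge0 => i _; apply: exprn_ge0.
  + exact: psd_qf.
- by rewrite (eq_bigr _ (fun i _ => @tr_sqnorm R _ (w i))).
- by move=> k; split; [exact: herm_outer | exact: psd_outer].
Qed.

Lemma objA x : obj12 G (mapA x) = obj11 G x.
Proof. by []. Qed.

Definition mapB (y : ('I_K -> 'M[R[i]]_M) * 'M[R[i]]_M) :=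
  (wstar h y.1, R0star h y.1 y.2).

Lemma objB y : obj11 G (mapB y) = obj12 G y.
Proof. by rewrite /obj11 /obj12 /= /R0star addrC subrK addrC. Qed.

Lemma featB y : feasibleSDR h P0 Gamma sigma2 y -> feasible11 h P0 Gamma sigma2 (mapB y).
Proof.
case: y => W R0 [sinr pow [hR pR] hW] /=.
have sinr' : forall k, (sigma2 k)%:C <= ((Gamma k)^-1)%:C * qf (h k) (W k) (h k)
    - \sum_(i < K | i != k) qf (h k) (W i) (h k) - qf (h k) R0 (h k).
  move=> k; have := sinr k; rewrite /Hm trH trH.
  by under eq_bigr => i _ do rewrite trH.
have S0 : forall k, 0 <= \sum_(i < K | i != k) qf (h k) (W i) (h k).
  by move=> k; apply: sumr_ge0 => i _; apply: psd_qf; case: (hW i).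
have Q0 : forall k, 0 <= qf (h k) R0 (h k) by move=> k; apply: psd_qf.
have a0 : forall k, 0 < qf (h k) (W k) (h k).
  move=> k; have s0 : 0 < (sigma2 k)%:C :> R[i] by rewrite ltC0.
  have : 0 < ((Gamma k)^-1)%:C * qf (h k) (W k) (h k).
    apply: (lt_le_trans s0); apply: (le_trans (sinr' k)).
    by rewrite lerBlDr lerBlDr -addrA lerDl addr_ge0.
  by rewrite pmulr_rgt0 // ltC0 invr_gt0.
have wk : forall k, `|ip (h k) (wstar h W k)| ^+ 2 = qf (h k) (W k) (h k).
  move=> k; rewrite /wstar abs2_ipZ // ip_qf ger0_norm ?ltW //.
  by rewrite expr2 mulfK // gt_eqF.
split.
- move=> k.
  have -> : \sum_(i < K | i != k) `|ip (h k) (wstar h W i)| ^+ 2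
      + qf (h k) (R0star h W R0) (h k)
    = \sum_(i < K | i != k) qf (h k) (W i) (h k) + qf (h k) R0 (h k).
    rewrite /R0star qfB qfD !qf_sum.
    under [X in _ + (_ + _ - X)]eq_bigr => i _ do rewrite -abs2_ip.
    have e1 : \sum_(i < K) qf (h k) (W i) (h k) = qf (h k) (W k) (h k) + \sum_(i < K | i != k) qf (h k) (W i) (h k) by rewrite [LHS](bigD1 k).
    have e2 : \sum_(i < K) `|ip (h k) (wstar h W i)| ^+ 2 = qf (h k) (W k) (h k) + \sum_(i < K | i != k) `|ip (h k) (wstar h W i)| ^+ 2.
      (rewrite [LHS](bigD1 k) //; congr (_ + _); try exact: wk).
    rewrite e1. rewrite e2.
    move: (\sum_(i < K | i != k) `|ip (h k) (wstar h W i)| ^+ 2) (\sum_(i < K | i != k) qf (h k) (W i) (h k)) (qf (h k) R0 (h k)) (qf (h k) (W k) (h k)) => A S Q a.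
    ring.
  rewrite wk sinr_equiv //; exact: sinr'.
- rewrite /R0star !mxtraceD (raddfN (@mxtrace R[i] M)) !(raddf_sum (@mxtrace R[i] M)).
  rewrite -(eq_bigr _ (fun i _ => @tr_sqnorm R _ (wstar h W i))).
  by rewrite addrC subrK addrC.
- rewrite /Pilot.Defs.hermitian /R0star ctransB ctransD !ctrans_sum hR.
  under eq_bigr => i _ do rewrite (proj1 (hW i)).
  by under [X in _ - X]eq_bigr => i _ do rewrite herm_outer.
- split.
    rewrite /Pilot.Defs.hermitian /R0star ctransB ctransD !ctrans_sum hR.
    under eq_bigr => i _ do rewrite (proj1 (hW i)).
    by under [X in _ - X]eq_bigr => i _ do rewrite herm_outer.
  move=> x; rewrite -[X in 0 <= X]/(qf x _ x) /R0star qfB qfD !qf_sum.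
  rewrite -addrA -sumrB addr_ge0 //; first exact: psd_qf.
  apply: sumr_ge0 => i _; rewrite subr_ge0 -abs2_ip /wstar abs2_ipZ // ip_qf.
  rewrite normCK qf_herm; last by case: (hW i).
  by apply: cs => //; case: (hW i).
Qed.

End Main.
Arguments mapA {R M K}.
Arguments mapB {R M K}.

Lemma inf_le (R : realType) (T1 T2 : Type) (A : set T1) (B : set T2)
  (f : T1 -> \bar R) (g : T2 -> \bar R) :
  (forall b, B b -> exists2 a, A a & (f a <= g b)%E) ->
  (ereal_inf [set f a | a in A] <= ereal_inf [set g b | b in B])%E.
Proof.
move=> H; apply/ereal_infP => _ [b Bb <-].
have [a Aa le] := H b Bb.
apply: le_trans le; apply: ereal_inf_lbound; by exists a.
Qed.

Theorem proposition1 (R : realType) (M N K : nat)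
  (G : 'M[R[i]]_(N, M)) (h : 'I_K -> 'cV[R[i]]_M)
  (P0 : R) (Gamma sigma2 : 'I_K -> R) :
  (0 < M)%N -> (0 < N)%N -> (0 < K)%N ->
  0 < P0 -> (forall k, 0 < Gamma k) -> (forall k, 0 < sigma2 k) ->
  val11 G h P0 Gamma sigma2 = val12 G h P0 Gamma sigma2 /\
  val12 G h P0 Gamma sigma2 = valSDR G h P0 Gamma sigma2 /\
  (forall (Wt : 'I_K -> 'M[R[i]]_M) (Rt : 'M[R[i]]_M),
     feasibleSDR h P0 Gamma sigma2 (Wt, Rt) ->
     obj12 G (Wt, Rt) = valSDR G h P0 Gamma sigma2 ->
     feasible11 h P0 Gamma sigma2 (wstar h Wt, R0star h Wt Rt) /\
     obj11 G (wstar h Wt, R0star h Wt Rt) = val11 G h P0 Gamma sigma2).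
Proof.
move=> _ _ _ _ Gam0 sig0.
have l1 : (val12 G h P0 Gamma sigma2 <= val11 G h P0 Gamma sigma2)%E.
  apply: inf_le => x fx; exists (mapA x); first by apply: featA.
  by rewrite objA.
have l2 : (valSDR G h P0 Gamma sigma2 <= val12 G h P0 Gamma sigma2)%E.
  by apply: inf_le => x fx; exists x; [exact: fx.1 | ].
have l3 : (val11 G h P0 Gamma sigma2 <= valSDR G h P0 Gamma sigma2)%E.
  apply: inf_le => y fy; exists (mapB h y); first by apply: featB.
  by rewrite objB.
have e1 : val11 G h P0 Gamma sigma2 = valSDR G h P0 Gamma sigma2.
  by apply/eqP; rewrite eq_le l3 (le_trans l2 l1).
have e2 : val12 G h P0 Gamma sigma2 = valSDR G h P0 Gamma sigma2.
  by apply/eqP; rewrite eq_le l2 -e1 l1.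
split; first by rewrite e1 e2.
split; first exact: e2.
move=> Wt Rt fs ob; split.
  exact: (@featB R M K h P0 Gamma sigma2 Gam0 sig0 (Wt, Rt) fs).
rewrite e1 -ob; exact: (@objB R M N K G h (Wt, Rt)).
Qed.
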